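(* Let $d\ge2$ and let $Q$ be a qplex. A map $f:S\to Q$ is an isomorphism of quantum state space onto $Q$ if and only if there is a SIC $\{\Pi_j\}_{j=1}^{d^2}$ such that $(f(\rho))(j)=\frac1d\mathrm{Tr}(\rho\Pi_j)$ for all $j$ and all $\rho\in S$. In particular, a SIC exists in dimension $d$ if and only if a Hilbert qplex exists in $\mathbb{R}^{d^2}$.
   Context: Fix an integer $d\ge 2$. $\langle\cdot,\cdot\rangle$ is the standard inner product on $\mathbb{R}^{d^2}$, $\|\cdot\|$ the Euclidean norm. $\Delta=\{p\in\mathbb{R}^{d^2}: p(i)\ge0,\ \sum_ip(i)=1\}$; $H=\{u\in\mathbb{R}^{d^2}:\sum_i u(i)=1\}$; $c=(1/d^2,\dots,1/d^2)$. For $A\subseteq H$ the polar is $A^*=\{u\in H:\langle u,v\rangle\ge\frac{1}{d(d+1)}\ \forall v\in A\}$. Out-ball $B_{\rm o}=\{u\in H:\|u-c\|\le r_{\rm o}\}$, $r_{\rm o}^2=\frac{d-1}{d^2(d+1)}$. A qplex is a set $Q\subseteq\Delta\cap B_{\rm o}$ with $Q^*=Q$. Let $B_H$ be the real vector space of Hermitian operators on $\mathbb{C}^d$ and $S$ the set of density matrices (positive semidefinite, trace 1). An isomorphism of quantum state space onto a qplex $Q$ is (the restriction to $S$ of) an $\mathbb{R}$-linear bijection $f:B_H\to\mathbb{R}^{d^2}$ with $f(S)=Q$ and $\langle f(\rho),f(\rho')\rangle=\frac{\mathrm{Tr}(\rho\rho')+1}{d(d+1)}$ for all $\rho,\rho'\in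 S$; a qplex admitting such an $f$ is a Hilbert qplex. A SIC in dimension $d$ is a set of $d^2$ rank-one orthogonal projectors $\Pi_1,\dots,\Pi_{d^2}$ on $\mathbb{C}^d$ with $\mathrm{Tr}(\Pi_k\Pi_l)=\frac{d\delta_{kl}+1}{d+1}$. *)

(* Defs.v *)
(* Complex numbers: an arbitrary numClosedFieldType C
   (e.g. algC); the reals are the elements x with x \is Num.real. *)
From HB Require Import structures.
From mathcomp Require Import all_boot all_order all_algebra.
Set Implicit Arguments. Unset Strict Implicit. Unset Printing Implicit Defensive.
Import Order.TTheory GRing.Theory Num.Theory.
Local Open Scope ring_scope.

Section QplexDefs.
Variable C : numClosedFieldType.
Variable d : nat.

(* vectors of R^{d^2} are row vectors with real entries *)
Definition vec := 'rV[C]_(d ^ 2).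
Definition mat := 'M[C]_d.

Definition realvec (u : vec) : Prop := forall i, u 0 i \is Num.real.

Definition ip (u v : vec) : C := \sum_(i < d ^ 2) u 0 i * v 0 i.

Definition inH (u : vec) : Prop := realvec u /\ \sum_(i < d ^ 2) u 0 i = 1.
Definition inDelta (u : vec) : Prop := inH u /\ forall i, 0 <= u 0 i.
Definition centre : vec := \row_(i < d ^ 2) ((d ^ 2)%:R)^-1.
Definition r_out2 : C := (d.-1)%:R / ((d ^ 2)%:R * (d.+1)%:R).
Definition inBout (u : vec) : Prop := inH u /\ ip (u - centre) (u - centre) <= r_out2.

Definition polar (A : vec -> Prop) (u : vec) : Prop :=
  inH u /\ forall v, A v -> (d%:R * (d.+1)%:R)^-1 <= ip u v.

Definition qplex (Q : vec -> Prop) : Prop :=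
  (forall u, Q u -> inDelta u /\ inBout u) /\ (forall u, polar Q u <-> Q u).

Definition adjmx (A : mat) : mat := (map_mx Num.conj A)^T.
Definition hermitian (A : mat) : Prop := adjmx A = A.
Definition psd (A : mat) : Prop :=
  forall x : 'cV[C]_d, 0 <= ((map_mx Num.conj x)^T *m A *m x) 0 0.
Definition density (rho : mat) : Prop := hermitian rho /\ psd rho /\ \tr rho = 1.

Definition RlinBij (f : mat -> vec) : Prop :=
  (forall A, hermitian A -> realvec (f A)) /\
  (forall (a : C) A B, a \is Num.real -> hermitian A -> hermitian B ->
      f (a *: A + B) = a *: f A + f B) /\
  (forall A B, hermitian A -> hermitian B -> f A = f B -> A = B) /\
  (forall u, realvec u -> exists2 A, hermitian A & f A = u).

Definition isomorphism_onto (g : mat -> vec) (Q : vec -> Prop) : Prop :=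
  exists f : mat -> vec,
    RlinBij f /\
    (forall rho, density rho -> f rho = g rho) /\
    (forall u, Q u <-> exists2 rho, density rho & f rho = u) /\
    (forall rho rho', density rho -> density rho' ->
       ip (f rho) (f rho') = (\tr (rho *m rho') + 1) / (d%:R * (d.+1)%:R)).

Definition hilbert_qplex (Q : vec -> Prop) : Prop :=
  qplex Q /\ exists g, isomorphism_onto g Q.

Definition rank_one_projector (P : mat) : Prop :=
  hermitian P /\ P *m P = P /\ \rank P = 1%N.

Definition SIC (Pi : 'I_(d ^ 2) -> mat) : Prop :=
  (forall k, rank_one_projector (Pi k)) /\
  (forall k l, \tr (Pi k *m Pi l) = (d%:R * (k == l)%:R + 1) / (d.+1)%:R).

End QplexDefs.

(* Main.v *)
Require Import Defs.
From HB Require Import structures.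
From mathcomp Require Import all_boot all_order all_algebra.
From mathcomp Require Import ring lra.
From mathcomp Require sesquilinear spectral.
Set Implicit Arguments. Unset Strict Implicit. Unset Printing Implicit Defensive.
Import Order.TTheory GRing.Theory Num.Theory.
Local Open Scope ring_scope.
Local Notation hermitian := Defs.hermitian.

Section Basics.
Variable C : numClosedFieldType.

Definition adj m n (A : 'M[C]_(m, n)) : 'M[C]_(n, m) := (map_mx Num.conj A)^T.

Lemma adjE m n (A : 'M[C]_(m, n)) i j : adj A i j = (A j i)^*.
Proof. by rewrite !mxE. Qed.

Lemma adjK m n (A : 'M[C]_(m, n)) : adj (adj A) = A.
Proof. by apply/matrixP=> i j; rewrite !adjE conjCK. Qed.

Lemma adjM m n p (A : 'M[C]_(m, n)) (B : 'M[C]_(n, p)) :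
  adj (A *m B) = adj B *m adj A.
Proof. by rewrite /adj map_mxM trmx_mul. Qed.

Lemma adjD m n (A B : 'M[C]_(m, n)) : adj (A + B) = adj A + adj B.
Proof. by apply/matrixP=> i j; rewrite !mxE rmorphD. Qed.

Lemma adjZ m n a (A : 'M[C]_(m, n)) : adj (a *: A) = a^* *: adj A.
Proof. by apply/matrixP=> i j; rewrite !mxE rmorphM. Qed.

Lemma adj1 n : adj (1%:M : 'M[C]_n) = 1%:M.
Proof. by apply/matrixP=> i j; rewrite !mxE eq_sym; case: eqP => _; rewrite ?rmorph1 ?rmorph0. Qed.

Lemma tr_adj n (A : 'M[C]_n) : \tr (adj A) = (\tr A)^*.
Proof. by rewrite /adj mxtrace_tr (trace_map_mx Num.conj). Qed.

Lemma adj11 (M : 'M[C]_1) : adj M 0 0 = (M 0 0)^*.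
Proof. by rewrite adjE. Qed.

Lemma mx11M (A B : 'M[C]_1) : (A *m B) 0 0 = A 0 0 * B 0 0.
Proof. by rewrite mxE big_ord1. Qed.

Lemma tr11 (A : 'M[C]_1) : \tr A = A 0 0.
Proof. by rewrite /mxtrace big_ord1. Qed.

End Basics.

Section Herm.
Variable C : numClosedFieldType.
Variable d : nat.
Local Notation mat := (mat C d).

Lemma adjmx_adj (A : mat) : adjmx A = adj A.
Proof. by []. Qed.

Lemma herm_real (A : mat) : hermitian A -> \tr A \is Num.real.
Proof. by move=> hA; apply/CrealP; rewrite -tr_adj -adjmx_adj hA. Qed.

Lemma hermM_real (A B : mat) : hermitian A -> hermitian B -> \tr (A *m B) \is Num.real.
Proof.
move=> hA hB; apply/CrealP; rewrite -tr_adj adjM -!adjmx_adj hA hB.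
exact: mxtrace_mulC.
Qed.

Lemma hermD (A B : mat) : hermitian A -> hermitian B -> hermitian (A + B).
Proof. by rewrite /hermitian !adjmx_adj adjD => -> ->. Qed.

Lemma hermZ a (A : mat) : a \is Num.real -> hermitian A -> hermitian (a *: A).
Proof. by move=> /CrealP ha; rewrite /hermitian !adjmx_adj adjZ ha => ->. Qed.

Lemma herm1 : hermitian (1%:M : mat).
Proof. exact: adj1. Qed.

Lemma herm0 : hermitian (0 : mat).
Proof. by apply/matrixP=> i j; rewrite !mxE rmorph0. Qed.

Lemma psd_conj (A B : mat) : psd A -> psd (B *m A *m adj B).
Proof.
move=> pA x; have := pA (adj B *m x).
by rewrite -!/(adj _) adjM adjK !mulmxA.
Qed.

Lemma adj_delta (i : 'I_d) : adj (delta_mx i 0 : 'cV[C]_d) = delta_mx 0 i.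
Proof. by apply/matrixP=> a b; rewrite !mxE conjC_nat andbC. Qed.

Lemma psd_diag (A : mat) i : psd A -> 0 <= A i i.
Proof.
move=> pA; have := pA (delta_mx i 0).
rewrite -/(adj _) adj_delta -rowE -colE !mxE //.
Qed.

Lemma psd_tr (A : mat) : psd A -> 0 <= \tr A.
Proof. by move=> pA; apply: sumr_ge0 => i _; apply: psd_diag. Qed.

Definition nrm (x : 'cV[C]_d) : C := (adj x *m x) 0 0.

Lemma nrm_gt0 (x : 'cV[C]_d) : x != 0 -> 0 < nrm x.
Proof.
move=> xn0.
have [i xi] : exists i, x i 0 != 0.
  apply/existsP; apply: contraR xn0 => /existsPn H.
  by apply/eqP/matrixP=> i j; rewrite ord1 mxE; apply/eqP/negbNE/H.
rewrite /nrm mxE (bigD1 i) //= ltr_wpDr //.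
  by apply: sumr_ge0 => k _; rewrite adjE mulrC mul_conjC_ge0.
by rewrite adjE mulrC lt_def mul_conjC_ge0 andbT mulf_neq0 // conjC_eq0.
Qed.

Lemma adj_mx11 (x y : 'cV[C]_d) : (adj x *m y) 0 0 = ((adj y *m x) 0 0)^*.
Proof. by rewrite -adj11 adjM adjK. Qed.

Lemma psd_of_tr (A : mat) :
  (forall rho, density rho -> 0 <= \tr (A *m rho)) -> psd A.
Proof.
move=> H x; have [->|xn0] := eqVneq x 0.
  by rewrite mulmx0 mxE.
have np := nrm_gt0 xn0.
have nr : (nrm x)^-1 \is Num.real by rewrite rpredV gtr0_real.
pose rho := (nrm x)^-1 *: (x *m adj x).
have dr : density rho.
  split; [|split].
  - apply: hermZ nr _; by rewrite /hermitian adjmx_adj adjM adjK.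
  - move=> y; rewrite /rho -/(adj y) -scalemxAr -scalemxAl mxE.
    rewrite mulr_ge0 //; first by rewrite ltW // invr_gt0.
    by rewrite mulmxA -[_ *m adj x *m y]mulmxA mx11M [X in _ * X]adj_mx11 mul_conjC_ge0.
  - by rewrite mxtraceZ mxtrace_mulC tr11 mulVf // gt_eqF.
have := H rho dr.
rewrite /rho -scalemxAr mxtraceZ mulmxA mxtrace_mulC mulmxA tr11.
by rewrite pmulr_rge0 // invr_gt0.
Qed.

End Herm.

Section Spec.
Variable C : numClosedFieldType.
Variable d : nat.
Local Notation mat := (mat C d).

Definition sform (U : mat) (l : 'rV[C]_d) : mat := adj U *m diag_mx l *m U.

Lemma spec (A : mat) : hermitian A ->
  exists U (l : 'rV[C]_d), [/\ U *m adj U = 1%:M, adj U *m U = 1%:M,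
    (forall i, l 0 i \is Num.real) & A = sform U l].
Proof.
move=> hA.
have hA' : A \is sesquilinear.hermitianmx d false Num.conj.
  apply/sesquilinear.is_hermitianmxP; rewrite expr0 scale1r.
  rewrite -map_trmx; exact: (esym hA).
have uni := spectral.spectral_unitarymx A.
have UU : spectral.spectralmx A *m adj (spectral.spectralmx A) = 1%:M.
  by move/spectral.unitarymxP: uni; rewrite /adj map_trmx.
exists (spectral.spectralmx A), (spectral.spectral_diag A); split => //.
- exact: mulmx1C.
- move=> i; have /mxOverP := spectral.hermitian_spectral_diag_real hA'.
  by apply.
- have /spectral.orthomx_spectralP E := spectral.hermitian_normalmx hA'.
  by rewrite /sform {1}E spectral.invmx_unitary // -map_trmx.
Qed.

Lemma sform_psd_ge0 (U : mat) (l : 'rV[C]_d) (i : 'I_d) : U *m adj U = 1%:M -> psd (sform U l) -> 0 <= l 0 i.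
Proof.
move=> UU pA; have := pA (adj U *m delta_mx i 0).
rewrite -/(adj _) adjM adjK adj_delta /sform !mulmxA.
rewrite -[delta_mx 0 i *m U *m adj U]mulmxA UU mulmx1.
rewrite -[_ *m U *m adj U]mulmxA UU mulmx1.
by rewrite -rowE -colE !mxE eqxx mulr1n.
Qed.

Lemma sform_psd (U : mat) (l : 'rV[C]_d) : (forall i, 0 <= l 0 i) -> psd (sform U l).
Proof.
move=> lp y; rewrite -/(adj y) /sform !mulmxA -adjM.
set z := U *m y.
rewrite -mulmxA mul_mx_diag mxE; apply: sumr_ge0 => j _.
by rewrite !mxE mulrAC mulr_ge0 // mulrC mul_conjC_ge0.
Qed.

Lemma sform_tr (U : mat) (l : 'rV[C]_d) : U *m adj U = 1%:M -> \tr (sform U l) = \sum_i l 0 i.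
Proof. by move=> UU; rewrite /sform mxtrace_mulC mulmxA UU mul1mx mxtrace_diag. Qed.

Lemma sform_sq (U : mat) (l : 'rV[C]_d) : U *m adj U = 1%:M ->
  sform U l *m sform U l = sform U (\row_j (l 0 j * l 0 j)).
Proof.
move=> UU; rewrite /sform !mulmxA -[_ *m U *m adj U]mulmxA UU mulmx1.
by rewrite -[_ *m diag_mx l *m diag_mx l]mulmxA mulmx_diag.
Qed.

Lemma sum_sq_le (l : 'rV[C]_d) : (forall i, 0 <= l 0 i) ->
  \sum_i (l 0 i * l 0 i) <= (\sum_i l 0 i) * (\sum_i l 0 i).
Proof.
move=> lp; rewrite mulr_suml; apply: ler_sum => i _.
apply: ler_wpM2l => //; rewrite (bigD1 i) //= lerDl.
by apply: sumr_ge0 => j _.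
Qed.

Lemma trM_psd_ge0 (A B : mat) : psd A -> hermitian B -> psd B -> 0 <= \tr (A *m B).
Proof.
move=> pA hB pB; have [U [l [UU UU' lr eB]]] := spec hB; rewrite eB in pB *.
have lp i := sform_psd_ge0 i UU pB.
rewrite /sform mulmxA mxtrace_mulC !mulmxA mul_mx_diag /mxtrace.
apply: sumr_ge0 => i _; rewrite mxE mulr_ge0 //.
exact: psd_diag (psd_conj _ pA).
Qed.

End Spec.

Section Dens.
Variable C : numClosedFieldType.
Variable d : nat.
Local Notation mat := (mat C d).

Lemma tr_sq_le1 (rho : mat) : density rho -> \tr (rho *m rho) <= 1.
Proof.
move=> [hr [pr tr1]]; have [U [l [UU UU' lr eB]]] := spec hr.
rewrite eB in pr tr1 *; have lp i := sform_psd_ge0 i UU pr.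
rewrite sform_tr // in tr1; rewrite sform_sq // sform_tr //.
rewrite (eq_bigr (fun i => l 0 i * l 0 i)); last by move=> i _; rewrite mxE.
by rewrite -[1](mulr1 1) -{1}tr1 -tr1; apply: sum_sq_le.
Qed.

Lemma tr_sq_le (P : mat) : hermitian P -> psd P -> \tr (P *m P) <= \tr P * \tr P.
Proof.
move=> hr pr; have [U [l [UU UU' lr eB]]] := spec hr.
rewrite eB in pr *; have lp i := sform_psd_ge0 i UU pr.
rewrite sform_sq // !sform_tr //.
rewrite (eq_bigr (fun i => l 0 i * l 0 i)); last by move=> i _; rewrite mxE.
exact: sum_sq_le.
Qed.

Lemma rank_one_of (P : mat) : hermitian P -> psd P -> \tr P = 1 ->
  \tr (P *m P) = 1 -> P *m P = P /\ \rank P = 1%N.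
Proof.
move=> hP pP t1 t2; have [U [l [UU UU' lr eB]]] := spec hP.
rewrite eB in pP t1 t2 *; have lp i := sform_psd_ge0 i UU pP.
rewrite sform_tr // in t1; rewrite sform_sq // sform_tr // in t2; rewrite sform_sq //.
have t2' : \sum_i (l 0 i * l 0 i) = 1.
  by rewrite -t2; apply: eq_bigr => i _; rewrite mxE.
have le1 i : l 0 i <= 1.
  by rewrite -t1 (bigD1 i) //= lerDl; apply: sumr_ge0 => j _.
have sq i : l 0 i * l 0 i = l 0 i.
  have H : \sum_i (l 0 i - l 0 i * l 0 i) = 0.
    by rewrite sumrB t1 t2' subrr.
  have nn j : true -> 0 <= l 0 j - l 0 j * l 0 j.
    by move=> _; rewrite -{1}(mulr1 (l 0 j)) -mulrBr mulr_ge0 // subr_ge0.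
  have /eqP := psumr_eq0P nn H (i := i) isT.
  by rewrite subr_eq0 eq_sym => /eqP.
have -> : (\row_j (l 0 j * l 0 j)) = l by apply/rowP=> j; rewrite mxE sq.
split => //.
have [i0 /andP[_ li0]] : exists i, true && (0 < l 0 i).
  apply: psumr_neq0P; first by move=> i _; exact: lp.
  by rewrite t1; apply/eqP; exact: oner_neq0.
have l1 : l 0 i0 = 1.
  by apply: (mulIf (lt0r_neq0 li0)); rewrite mul1r sq.
have l0 j : j != i0 -> l 0 j = 0.
  have H : \sum_(j | j != i0) l 0 j = 0.
    have := t1; rewrite (bigD1 i0) //= l1 -{2}[1]addr0.
    by move/addrI.
  by move=> nj; apply: (psumr_eq0P _ H).
rewrite /sform; have -> : diag_mx l = delta_mx i0 i0.
  apply/matrixP=> a b; rewrite !mxE.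
  have [->|ne] := eqVneq a i0.
    by rewrite l1 /= eq_sym.
  by rewrite l0 // mul0rn.
rewrite mxrankMfree; last by rewrite row_free_unit; case: (mulmx1_unit UU).
rewrite (eqmxMfull _ _); first exact: mxrank_delta.
by rewrite row_full_unit; case: (mulmx1_unit UU').
Qed.

End Dens.

Section SICfacts.
Variable C : numClosedFieldType.
Variable d : nat.
Hypothesis d0 : (0 < d)%N.
Local Notation mat := (mat C d).
Local Notation vec := (vec C d).

Lemma dn0 : d%:R != 0 :> C.
Proof. by rewrite pnatr_eq0 -lt0n. Qed.
Lemma dSn0 : d.+1%:R != 0 :> C.
Proof. by rewrite pnatr_eq0. Qed.
Lemma natS : d.+1%:R = d%:R + 1 :> C.
Proof. by rewrite -addn1 natrD. Qed.
Lemma dSn0' : 1 + d%:R != 0 :> C.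
Proof. by have := dSn0; rewrite natS addrC. Qed.
Lemma dSn0'' : d%:R + 1 != 0 :> C.
Proof. by have := dSn0; rewrite natS. Qed.
Lemma d2E : (d ^ 2)%:R = d%:R * d%:R :> C.
Proof. by rewrite natrX expr2. Qed.
Lemma d_gt0 : 0 < d%:R :> C.
Proof. by rewrite ltr0n. Qed.

Lemma sum_delta (n : nat) (F : 'I_n -> C) k : \sum_j F j * (j == k)%:R = F k.
Proof.
rewrite (bigD1 k) //= eqxx mulr1 big1 ?addr0 // => j /negPf ->.
by rewrite mulr0.
Qed.

Variable Pi : 'I_(d ^ 2) -> mat.
Hypothesis hS : SIC Pi.

Lemma Pi_tr j : \tr (Pi j) = 1.
Proof.
have [[_ [PP _]] G] := (hS.1 j, hS.2 j j).
rewrite PP eqxx mulr1 in G; rewrite G -natS divff //; exact: dSn0.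
Qed.

Lemma Pi_herm j : hermitian (Pi j).
Proof. by case: (hS.1 j). Qed.

Lemma Pi_trM j k : \tr (Pi j *m Pi k) = (d%:R * (j == k)%:R + 1) / d.+1%:R.
Proof. exact: hS.2. Qed.

Definition Mv : 'M[C]_(d ^ 2, d * d) := \matrix_(j, k) mxvec (Pi j) 0 k.
Definition Nv : 'M[C]_(d * d, d ^ 2) := \matrix_(k, l) mxvec ((Pi l)^T) 0 k.

Lemma MNv : Mv *m Nv = \matrix_(j, l) \tr (Pi j *m Pi l).
Proof.
apply/matrixP=> j l; rewrite !mxE (reindex _ (curry_mxvec_bij _ _)) /=.
rewrite /mxtrace.
rewrite (eq_bigr (fun a => \sum_b Pi j a b * Pi l b a)); last first.
  by move=> a _; rewrite mxE.
rewrite pair_bigA /=; apply: eq_bigr => [[a b]] _ /=.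
by rewrite !mxE !mxvecE mxE.
Qed.

Definition gm (a b : C) : 'M[C]_(d ^ 2) := \matrix_(j, k) (a * (j == k)%:R + b).

Lemma gm_mul a b a' b' : gm a b *m gm a' b' = gm (a * a') (a * b' + b * a' + (d ^ 2)%:R * (b * b')).
Proof.
apply/matrixP=> j l; rewrite !mxE.
rewrite (eq_bigr (fun k => (a * a' * (j == l)%:R) * (k == j)%:R + a * b' * (k == j)%:R
   + b * a' * (k == l)%:R + b * b')); last first.
  move=> k _; rewrite !mxE.
  have E : (j == k)%:R * (k == l)%:R = (j == l)%:R * (k == j)%:R :> C.
    by case: (eqVneq j k) => [->|njk]; rewrite ?mul1r ?mulr1 ?mul0r ?mulr0.
  transitivity (a * a' * ((j == k)%:R * (k == l)%:R) + a * b' * (j == k)%:R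
     + b * a' * (k == l)%:R + b * b'); first by ring.
  by rewrite E (eq_sym j k) mulrA.
rewrite !big_split /= !sum_delta sumr_const card_ord.
by rewrite -mulr_natl; ring.
Qed.


Lemma G_gm : \matrix_(j, l) \tr (Pi j *m Pi l) = gm (d%:R / d.+1%:R) (d.+1%:R^-1).
Proof.
apply/matrixP=> j l; rewrite !mxE Pi_trM.
by ring.
Qed.

Lemma G_unit : Mv *m Nv \in unitmx.
Proof.
have H : Mv *m Nv *m gm (d.+1%:R / d%:R) (- ((d ^ 2)%:R^-1)) = 1%:M.
  rewrite MNv G_gm gm_mul.
  have -> : d%:R / d.+1%:R * (d.+1%:R / d%:R) = 1 :> C.
    by field; rewrite dn0 dSn0'.
  have -> : d%:R / d.+1%:R * - (d ^ 2)%:R^-1 + d.+1%:R^-1 * (d.+1%:R / d%:R) +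
     (d ^ 2)%:R * (d.+1%:R^-1 * - (d ^ 2)%:R^-1) = 0 :> C.
    by rewrite d2E natS; field; rewrite ?dn0 ?dSn0 ?dSn0' ?dSn0''.
  by apply/matrixP=> j l; rewrite !mxE mul1r addr0.
by case: (mulmx1_unit H).
Qed.

Lemma Mv_full : row_full Mv.
Proof.
rewrite /row_full eqn_leq rank_leq_col /=.
by have := mxrankM_maxl Mv Nv; rewrite mxrank_unit ?G_unit.
Qed.

Lemma span (A : mat) : exists c : 'I_(d ^ 2) -> C, A = \sum_j c j *: Pi j.
Proof.
have /submxP [D eD] := submx_full (mxvec A) Mv_full.
exists (fun j => D 0 j); apply/matrixP=> a b.
rewrite -[A a b](mxvecE A) eD summxE mxE; apply: eq_bigr => j _.
by rewrite !mxE mxvecE.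
Qed.


Lemma tr_big (F : 'I_(d ^ 2) -> mat) : \tr (\sum_j F j) = \sum_j \tr (F j).
Proof. exact: raddf_sum. Qed.

Lemma trM_sum (c : 'I_(d ^ 2) -> C) k :
  \tr ((\sum_j c j *: Pi j) *m Pi k) = (d%:R * c k + \sum_j c j) / d.+1%:R.
Proof.
rewrite mulmx_suml tr_big.
rewrite (eq_bigr (fun j => (d%:R / d.+1%:R * c j) * (j == k)%:R + d.+1%:R^-1 * c j)); last first.
  by move=> j _; rewrite -scalemxAl mxtraceZ Pi_trM; ring.
by rewrite big_split /= sum_delta -mulr_sumr; ring.
Qed.

Lemma tr_sum (c : 'I_(d ^ 2) -> C) : \tr (\sum_j c j *: Pi j) = \sum_j c j.
Proof.
by rewrite tr_big; apply: eq_bigr => j _; rewrite mxtraceZ Pi_tr mulr1.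
Qed.

Lemma recon (A : mat) :
  A = \sum_j ((d.+1%:R * \tr (A *m Pi j) - \tr A) / d%:R) *: Pi j.
Proof.
have [c eA] := span A.
rewrite {1}eA; apply: eq_bigr => j _; congr (_ *: _).
rewrite eA trM_sum tr_sum.
by field; rewrite ?dn0 ?dSn0 ?dSn0' ?dSn0''.
Qed.

Lemma sumPi : \sum_j Pi j = d%:R *: 1%:M.
Proof.
have e := recon 1%:M.
rewrite (eq_bigr (fun j => d%:R^-1 *: Pi j)) in e; last first.
  move=> j _; rewrite mul1mx Pi_tr mxtrace1 mulr1 natS; congr (_ *: _).
  by field; rewrite ?dn0.
by rewrite -scaler_sumr in e; rewrite [in RHS]e scalerA divff ?dn0 // scale1r.
Qed.

Lemma sum_trPi (A : mat) : \sum_j \tr (A *m Pi j) = d%:R * \tr A.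
Proof.
by rewrite -tr_big -mulmx_sumr sumPi -scalemxAr mulmx1 mxtraceZ.
Qed.

Definition Fm (A : mat) : vec := \row_j (d%:R^-1 * \tr (A *m Pi j)).

Lemma ipF (A B : mat) :
  ip (Fm A) (Fm B) = (\tr (A *m B) + \tr A * \tr B) / (d%:R * d.+1%:R).
Proof.
have tAB : \tr (A *m B) = \sum_j ((d.+1%:R * \tr (B *m Pi j) - \tr B) / d%:R * \tr (A *m Pi j)).
  rewrite {1}(recon B) mulmx_sumr tr_big; apply: eq_bigr => j _.
  by rewrite -scalemxAr mxtraceZ.
have e2 : \sum_j ((d.+1%:R * \tr (B *m Pi j) - \tr B) / d%:R * \tr (A *m Pi j)) =
   d.+1%:R / d%:R * \sum_j (\tr (A *m Pi j) * \tr (B *m Pi j)) - \tr B / d%:R * (d%:R * \tr A).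
  rewrite -sum_trPi !mulr_sumr -sumrB; apply: eq_bigr => j _; ring.
rewrite tAB e2 /ip.
rewrite (eq_bigr (fun j => (d%:R ^+ 2)^-1 * (\tr (A *m Pi j) * \tr (B *m Pi j)))); last first.
  by move=> j _; rewrite !mxE; field; rewrite ?dn0.
rewrite -mulr_sumr; set S := \sum_j _.
by rewrite natS; field; rewrite ?dn0 ?dSn0 ?dSn0' ?dSn0''.
Qed.

Lemma FmE (A : mat) j : Fm A 0 j = d%:R^-1 * \tr (A *m Pi j).
Proof. by rewrite mxE. Qed.

Lemma Fm_lin a (A B : mat) : Fm (a *: A + B) = a *: Fm A + Fm B.
Proof.
apply/rowP=> j; rewrite !mxE mulmxDl -scalemxAl mxtraceD mxtraceZ; ring.
Qed.

Lemma Fm_real (A : mat) : hermitian A -> realvec (Fm A).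
Proof.
move=> hA j; rewrite mxE realM ?rpredV ?realn //.
exact: hermM_real hA (Pi_herm j).
Qed.

Lemma sumFm (A : mat) : \sum_j Fm A 0 j = \tr A.
Proof.
under eq_bigr do rewrite mxE.
by rewrite -mulr_sumr sum_trPi mulKf ?dn0.
Qed.

Lemma recon_F (A : mat) :
  A = \sum_j ((d.+1%:R * (d%:R * Fm A 0 j) - \sum_k Fm A 0 k) / d%:R) *: Pi j.
Proof.
rewrite {1}(recon A) sumFm; apply: eq_bigr => j _; rewrite mxE.
by congr (_ *: _); field; rewrite ?dn0.
Qed.

Lemma Fm_inj (A B : mat) : Fm A = Fm B -> A = B.
Proof. by move=> e; rewrite (recon_F A) (recon_F B) e. Qed.

Lemma herm_sum (c : 'I_(d ^ 2) -> C) : (forall j, c j \is Num.real) ->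
  hermitian (\sum_j c j *: Pi j).
Proof.
move=> cr; apply: (big_ind (fun X : mat => hermitian X)) => [|X Y|j _]; [exact: herm0|exact: hermD|].
exact: hermZ (cr j) (Pi_herm j).
Qed.

Lemma Fm_surj (u : vec) : realvec u -> exists2 A, hermitian A & Fm A = u.
Proof.
move=> ur; set s := \sum_k u 0 k.
have sr : s \is Num.real by apply: rpred_sum => k _; exact: ur.
pose c j := d.+1%:R * u 0 j - s / d%:R.
exists (\sum_j c j *: Pi j).
  apply: herm_sum => j; apply: rpredB; first by apply: realM; [exact: realn | exact: ur].
  by apply: realM; [exact: sr | rewrite rpredV realn].
apply/rowP=> k; rewrite mxE trM_sum.
have -> : \sum_j c j = s.
  rewrite /c sumrB -mulr_sumr sumr_const card_ord -[_ *+ d ^ 2]mulr_natl d2E.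
  by rewrite -/s natS; field; rewrite ?dn0.
by rewrite /c natS; field; rewrite ?dn0 ?dSn0 ?dSn0' ?dSn0''.
Qed.


Local Notation K := (d%:R * d.+1%:R : C).

Lemma K_gt0 : 0 < K.
Proof. by rewrite mulr_gt0 // ltr0n. Qed.

Lemma psd1 : psd (1%:M : mat).
Proof.
move=> x; rewrite mulmx1 mxE; apply: sumr_ge0 => i _.
by rewrite !mxE mulrC mul_conjC_ge0.
Qed.

Lemma psd_proj (P : mat) : hermitian P -> P *m P = P -> psd P.
Proof.
move=> hP PP; suff: psd (P *m 1%:M *m adj P) by rewrite mulmx1 -adjmx_adj hP PP.
exact: psd_conj psd1.
Qed.

Lemma Pi_psd j : psd (Pi j).
Proof. by apply: psd_proj (Pi_herm j) _; case: (hS.1 j) => _ []. Qed.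

Lemma Fm_ge0 (rho : mat) j : density rho -> 0 <= Fm rho 0 j.
Proof.
move=> [hr [pr _]]; rewrite mxE mulr_ge0 ?invr_ge0 ?ler0n //.
exact: trM_psd_ge0 pr (Pi_herm j) (Pi_psd j).
Qed.

Lemma Fm_H (rho : mat) : density rho -> inH (Fm rho).
Proof. by move=> [hr [pr tr1]]; split; [exact: Fm_real | rewrite sumFm]. Qed.

Definition Q0 (u : vec) : Prop := exists2 rho, density rho & Fm rho = u.

Lemma polar_img (u : vec) : inH u ->
  (forall rho, density rho -> K^-1 <= ip u (Fm rho)) -> Q0 u.
Proof.
move=> [ur su] H.
have [A hA eA] := Fm_surj ur.
have trA : \tr A = 1 by rewrite -sumFm eA.
exists A => //; split => //; split => //.
apply: psd_of_tr => rho dr.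
have := H rho dr; rewrite -eA ipF trA mul1r (proj2 (proj2 dr)) mulrDl mul1r.
by rewrite lerDr pmulr_lge0 // invr_gt0 K_gt0.
Qed.

Lemma ip_dens (rho sigma : mat) : density rho -> density sigma ->
  ip (Fm rho) (Fm sigma) = (\tr (rho *m sigma) + 1) / K.
Proof.
by move=> [_ [_ t1]] [_ [_ t2]]; rewrite ipF t1 t2 mulr1.
Qed.

Lemma sic_iso (Q : vec -> Prop) (g : mat -> vec) : qplex Q ->
  (forall rho, density rho -> Q (g rho)) ->
  (forall rho, density rho -> forall j, g rho 0 j = d%:R^-1 * \tr (rho *m Pi j)) ->
  isomorphism_onto g Q.
Proof.
move=> [qD qP] gQ gE; exists Fm; split; [|split; [|split]].
- split; [exact: Fm_real|split; [|split]].
  + by move=> a A B _ _ _; exact: Fm_lin.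
  + by move=> A B _ _; exact: Fm_inj.
  + exact: Fm_surj.
- by move=> rho dr; apply/rowP=> j; rewrite gE // mxE.
- move=> u; split; last first.
    move=> [rho dr <-].
    have -> : Fm rho = g rho by apply/rowP=> j; rewrite gE // mxE.
    exact: gQ.
  move=> /qP [uH uP]; apply: polar_img uH _ => rho dr.
  apply: uP; have -> : Fm rho = g rho by apply/rowP=> j; rewrite gE // mxE.
  exact: gQ.
- by move=> rho rho' dr dr'; rewrite ip_dens.
Qed.

Lemma ip_centre (u : vec) : ip (u - centre C d) (u - centre C d) =
  ip u u - 2%:R * (d ^ 2)%:R^-1 * \sum_i u 0 i + (d ^ 2)%:R^-1.
Proof.
rewrite /ip (eq_bigr (fun i => u 0 i * u 0 i - 2%:R * (d ^ 2)%:R^-1 * u 0 i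
   + (d ^ 2)%:R^-1 * (d ^ 2)%:R^-1)); last by move=> i _; rewrite !mxE; ring.
rewrite big_split /= sumrB -mulr_sumr sumr_const card_ord -mulr_natl.
by rewrite d2E; field; rewrite ?dn0.
Qed.

Lemma img_qplex : qplex Q0.
Proof.
split.
  move=> u [rho dr <-]; split; first by split; [exact: Fm_H|move=> j; exact: Fm_ge0].
  split; first exact: Fm_H.
  rewrite ip_centre ip_dens // (proj2 (Fm_H dr)).
  have x1 := tr_sq_le1 dr; set x := \tr (rho *m rho) in x1 *.
  have -> : (x + 1) / K - 2%:R * (d ^ 2)%:R^-1 * 1 + (d ^ 2)%:R^-1 =
     r_out2 C d - (1 - x) / K.
    rewrite /r_out2 d2E.
    have -> : (d.-1)%:R = d%:R - 1 :> C by rewrite -{2}(prednK d0) -natr1 addrK.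
    by rewrite natS; field; rewrite ?dn0 ?dSn0 ?dSn0' ?dSn0''.
  by rewrite gerBl divr_ge0 ?subr_ge0 // ltW // K_gt0.
move=> u; split.
  move=> [uH uP]; apply: polar_img uH _ => rho dr; apply: uP.
  by exists rho.
move=> [rho dr <-]; split; first exact: Fm_H.
move=> v [sigma ds <-]; rewrite ip_dens // mulrDl mul1r lerDr.
rewrite pmulr_lge0 ?invr_gt0 ?K_gt0 //.
by case: dr => [_ [pr _]]; case: ds => [hs [ps _]]; exact: trM_psd_ge0.
Qed.

Lemma img_iso : isomorphism_onto Fm Q0.
Proof.
apply: sic_iso img_qplex _ _; first by move=> rho dr; exists rho.
by move=> rho _ j; rewrite mxE.
Qed.

End SICfacts.

Section IPlin.
Variable C : numClosedFieldType.
Variable d : nat.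
Local Notation vec := (vec C d).

Lemma ipDl (u v w : vec) : ip (u + v) w = ip u w + ip v w.
Proof. by rewrite /ip -big_split; apply: eq_bigr => i _; rewrite mxE mulrDl. Qed.
Lemma ipZl a (u w : vec) : ip (a *: u) w = a * ip u w.
Proof. by rewrite /ip mulr_sumr; apply: eq_bigr => i _; rewrite mxE mulrA. Qed.
Lemma ipC (u v : vec) : ip u v = ip v u.
Proof. by apply: eq_bigr => i _; rewrite mulrC. Qed.
Lemma ipDr (u v w : vec) : ip w (u + v) = ip w u + ip w v.
Proof. by rewrite ipC ipDl !(ipC w). Qed.
Lemma ipZr a (u w : vec) : ip w (a *: u) = a * ip w u.
Proof. by rewrite ipC ipZl ipC. Qed.
Lemma ip_delta (v : vec) k : ip v (delta_mx 0 k) = v 0 k.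
Proof.
rewrite /ip -[RHS](sum_delta (fun i => v 0 i)); apply: eq_bigr => i _.
by rewrite mxE eqxx.
Qed.
End IPlin.

Section Iso.
Variable C : numClosedFieldType.
Variable d : nat.
Hypothesis d0 : (0 < d)%N.
Local Notation mat := (mat C d).
Local Notation vec := (vec C d).
Local Notation K := (d%:R * d.+1%:R : C).

Lemma psd_scale a (A : mat) : 0 <= a -> psd A -> psd (a *: A).
Proof.
move=> a0 pA x; rewrite -scalemxAr -scalemxAl mxE mulr_ge0 //; exact: pA.
Qed.

Definition omega : mat := d%:R^-1 *: 1%:M.

Lemma omega_dens : density omega.
Proof.
rewrite /omega; split; first by apply: hermZ; [rewrite rpredV realn | exact: @herm1 C d].
split; first by refine (psd_scale _ (@psd1 C d)); rewrite invr_ge0 ler0n.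
by rewrite mxtraceZ mxtrace1 mulVf // dn0.
Qed.

Lemma decomp (A : mat) : hermitian A -> exists a b rho,
  [/\ a \is Num.real, b \is Num.real, density rho & A = a *: rho + b *: omega].
Proof.
move=> hA; have [U [l [UU UU' lr eA]]] := spec hA.
pose t := 1 + \sum_i `|l 0 i|.
have tr : t \is Num.real.
  by apply: rpredD; [exact: rpred1 | apply: rpred_sum => i _; exact: normr_real].
have lt1 i : 1 <= l 0 i + t.
  rewrite /t addrCA lerDl (bigD1 i) //= addrA addr_ge0 ?sumr_ge0 //.
  have hr : - l 0 i \is Num.real by rewrite rpredN.
  by have := real_ler_norm hr; rewrite normrN -subr_ge0 opprK addrC.
pose l' := \row_i (l 0 i + t).
have eB : A + t *: 1%:M = sform U l'.
  rewrite eA /sform.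
  have -> : diag_mx l' = diag_mx l + t *: 1%:M.
    apply/matrixP=> a b; rewrite !mxE.
    by case: (a == b); rewrite ?mulr1n ?mulr0n ?mulr1 ?mulr0 ?addr0.
  by rewrite mulmxDr mulmxDl -scalemxAr mulmx1 -scalemxAl UU'.
pose s := \tr (A + t *: 1%:M).
have s_ge : d%:R <= s.
  rewrite /s eB sform_tr // -[d as X in X%:R]card_ord -sumr_const.
  by apply: ler_sum => i _; rewrite mxE.
have s_gt0 : 0 < s by apply: lt_le_trans s_ge; rewrite ltr0n.
have sr : s \is Num.real by exact: gtr0_real.
exists s, (- (t * d%:R)), (s^-1 *: (A + t *: 1%:M)); split.
- exact: sr.
- by rewrite rpredN realM ?realn.
- split; first by apply: hermZ _ (hermD hA (hermZ tr (@herm1 C d))); rewrite rpredV.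
  split; last by rewrite mxtraceZ mulVf // gt_eqF.
  refine (psd_scale _ _); first by rewrite invr_ge0 ltW.
  by rewrite eB; apply: sform_psd => i; rewrite mxE (le_trans _ (lt1 i)).
- rewrite scalerA divff ?gt_eqF // scale1r /omega scalerA.
  rewrite mulNr -mulrA divff ?dn0 // mulr1 scaleNr.
  by rewrite addrK.
Qed.

Variable f : mat -> vec.
Hypothesis Hf : RlinBij f.
Hypothesis Hip : forall rho rho', density rho -> density rho' ->
       ip (f rho) (f rho') = (\tr (rho *m rho') + 1) / (d%:R * (d.+1)%:R).

Lemma f0 : f 0 = 0.
Proof.
have := (proj1 (proj2 Hf)) 1 0 0 (rpred1 _) (@herm0 C d) (@herm0 C d).
rewrite scale1r addr0 scale1r => H.
by apply: (addrI (f 0)); rewrite addr0; exact: esym H.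
Qed.

Lemma fZD a b (A B : mat) : a \is Num.real -> b \is Num.real -> hermitian A -> hermitian B ->
  f (a *: A + b *: B) = a *: f A + b *: f B.
Proof.
move=> ar br hA hB; rewrite (proj1 (proj2 Hf)) //; last exact: hermZ.
congr (_ + _); have := (proj1 (proj2 Hf)) b B 0 br hB (@herm0 C d).
by rewrite f0 !addr0.
Qed.

Lemma ipext (A B : mat) : hermitian A -> hermitian B ->
  ip (f A) (f B) = (\tr (A *m B) + \tr A * \tr B) / K.
Proof.
move=> hA hB.
have [a [b [r [ar br dr eA]]]] := decomp hA.
have [a' [b' [s [ar' br' ds eB]]]] := decomp hB.
have [hr [_ tr1]] := dr; have [hs [_ ts1]] := ds.
have [ho [_ to1]] := omega_dens.
rewrite eA eB !fZD // !(ipDl, ipDr, ipZl, ipZr) !Hip //; try exact: omega_dens.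
rewrite !(mulmxDl, mulmxDr) -!(scalemxAl, scalemxAr) !(mxtraceD, mxtraceZ) tr1 ts1.
rewrite mxtrace1 !mulmx1 !mul1mx tr1 ts1 mxtrace1.
by field; rewrite ?dn0 ?dSn0 ?dSn0' ?dSn0''.
Qed.


Hypothesis Hpos : forall rho, density rho -> inDelta (f rho).

Section Basis.
Variable A : 'I_(d ^ 2) -> mat.
Hypothesis hA : forall k, hermitian (A k).
Hypothesis fA : forall k, f (A k) = delta_mx 0 k.

Definition tt k := \tr (A k).
Definition Pk k : mat := d.+1%:R^-1 *: (A k + tt k *: 1%:M).

Lemma tt_real k : tt k \is Num.real.
Proof. exact: herm_real. Qed.

Lemma Pk_herm k : hermitian (Pk k).
Proof.
apply: hermZ; first by rewrite rpredV realn.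
by apply: hermD (hA k) (hermZ (tt_real k) (@herm1 C d)).
Qed.

Lemma fE rho k : density rho -> f rho 0 k = d%:R^-1 * \tr (rho *m Pk k).
Proof.
move=> dr; have [hr [_ tr1]] := dr.
rewrite -ip_delta -fA ipext // tr1 mul1r /Pk -scalemxAr mxtraceZ mulmxDr.
rewrite mxtraceD -scalemxAr mxtraceZ mulmx1 tr1 mulr1 /tt.
by field; rewrite ?dn0 ?dSn0 ?dSn0' ?dSn0''.
Qed.

Lemma gram k l : (k == l)%:R = (\tr (A k *m A l) + tt k * tt l) / K.
Proof.
have := ipext (hA k) (hA l); rewrite !fA ip_delta mxE eqxx /= eq_sym => ->.
by [].
Qed.

Lemma trPk k : \tr (Pk k) = tt k.
Proof.
rewrite /Pk mxtraceZ mxtraceD mxtraceZ mxtrace1 natS.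
by field; rewrite ?dn0 ?dSn0 ?dSn0' ?dSn0''.
Qed.

Lemma trPP k l : \tr (Pk k *m Pk l) = (d%:R * (k == l)%:R + tt k * tt l) / d.+1%:R.
Proof.
have eX : \tr (A k *m A l) = K * (k == l)%:R - tt k * tt l.
  by rewrite (gram k l); field; rewrite ?dn0 ?dSn0 ?dSn0' ?dSn0''.
rewrite /Pk -scalemxAr -scalemxAl !mxtraceZ !(mulmxDl, mulmxDr).
rewrite -!(scalemxAl, scalemxAr) !(mxtraceD, mxtraceZ) mulmx1 mul1mx mulmx1 mxtrace1 eX /tt.
by rewrite natS; field; rewrite ?dn0 ?dSn0 ?dSn0' ?dSn0''.
Qed.

Lemma Pk_psd k : psd (Pk k).
Proof.
apply: psd_of_tr => rho dr; rewrite mxtrace_mulC.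
have := (Hpos dr).2 k; rewrite fE //.
by rewrite pmulr_rge0 // invr_gt0 ltr0n.
Qed.

Lemma sum_tt : \sum_k tt k = (d ^ 2)%:R.
Proof.
have := (Hpos omega_dens).1.2.
rewrite (eq_bigr (fun k => (d%:R ^+ 2)^-1 * tt k)); last first.
  move=> k _; rewrite fE; last exact: omega_dens.
  rewrite /omega -scalemxAl mul1mx mxtraceZ trPk.
  by field; rewrite ?dn0.
rewrite -mulr_sumr d2E => H.
by rewrite -[LHS]mul1r -H; field; rewrite ?dn0.
Qed.

Lemma tt_ge1 k : 1 <= tt k.
Proof.
have h := tr_sq_le (Pk_herm k) (Pk_psd k).
rewrite trPP trPk eqxx mulr1 ler_pdivrMr ?ltr0n // natS mulrDr mulr1 in h.
rewrite lerD2r -{1}[d%:R]mul1r ler_pM2r ?ltr0n // in h.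
have t0 : 0 <= tt k by rewrite -trPk; apply: psd_tr (Pk_psd k).
by rewrite -(ler_pXn2r (n := 2)) // ?expr1n ?expr2 // ?nnegrE // ler01.
Qed.

Lemma tt1 k : tt k = 1.
Proof.
have H : \sum_j (tt j - 1) = 0.
  by rewrite sumrB sum_tt sumr_const card_ord subrr.
have nn j : true -> 0 <= tt j - 1 by move=> _; rewrite subr_ge0 tt_ge1.
by have /eqP := psumr_eq0P nn H (i := k) isT; rewrite subr_eq0 => /eqP.
Qed.

Lemma Pk_SIC : SIC Pk.
Proof.
split=> [k|k l]; last by rewrite trPP !tt1 mulr1.
have [PP r1] : Pk k *m Pk k = Pk k /\ \rank (Pk k) = 1%N.
  apply: rank_one_of (Pk_herm k) (Pk_psd k) _ _; first by rewrite trPk tt1.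
  by rewrite trPP !tt1 eqxx !mulr1 -natS divff // dSn0.
by split; [exact: Pk_herm|split].
Qed.

End Basis.

Lemma iso_SIC : exists Pi : 'I_(d ^ 2) -> mat, SIC Pi /\
  forall rho, density rho -> forall j, f rho 0 j = d%:R^-1 * \tr (rho *m Pi j).
Proof.
have H k : exists2 A, hermitian A & f A = delta_mx 0 k.
  by apply: (proj2 (proj2 (proj2 Hf))) => i; rewrite mxE realn.
have [A hA fA] := fin_all_exists2 H.
exists (Pk A); split; first exact: Pk_SIC.
by move=> rho dr j; apply: fE.
Qed.

End Iso.

Unset Implicit Arguments.

Theorem mainTheorem17 (C : numClosedFieldType) (d : nat) (hd : (2 <= d)%N) :
  (forall (Q : vec C d -> Prop) (g : mat C d -> vec C d),
     qplex Q ->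
     (forall rho, density rho -> Q (g rho)) ->
     (isomorphism_onto g Q <->
      exists Pi : 'I_(d ^ 2) -> mat C d,
        SIC Pi /\
        forall rho, density rho ->
          forall j, g rho 0 j = (d%:R)^-1 * \tr (rho *m Pi j)))
  /\
  ((exists Pi : 'I_(d ^ 2) -> mat C d, SIC Pi) <->
   (exists Q : vec C d -> Prop, hilbert_qplex Q)).
Proof.
have d0 : (0 < d)%N by apply: leq_trans hd.
have P1 : forall (Q : vec C d -> Prop) (g : mat C d -> vec C d),
     qplex Q ->
     (forall rho, density rho -> Q (g rho)) ->
     (isomorphism_onto g Q <->
      exists Pi : 'I_(d ^ 2) -> mat C d,
        SIC Pi /\
        forall rho, density rho ->
          forall j, g rho 0 j = (d%:R)^-1 * \tr (rho *m Pi j)).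
  move=> Q g qQ gQ; split.
    move=> [f [Hf [fg [HQ Hip]]]].
    have Hpos rho : density rho -> inDelta (f rho).
      by move=> dr; apply: (proj1 (qQ.1 _ _)); apply/HQ; exists rho.
    have [Pi [hS E]] := iso_SIC d0 Hf Hip Hpos.
    by exists Pi; split => // rho dr j; rewrite -fg // E.
  move=> [Pi [hS gE]]; exact: (@sic_iso C d d0 Pi hS Q g qQ gQ gE).
split => //.
split.
  move=> [Pi hS]; exists (Q0 Pi); split; first exact: (@img_qplex C d d0 Pi hS).
  by exists (Fm Pi); exact: (@img_iso C d d0 Pi hS).
move=> [Q [qQ [g iso]]].
have gQ rho : density rho -> Q (g rho).
  move=> dr; case: iso => f [_ [fg [HQ _]]]; rewrite -fg //.
  by apply/HQ; exists rho.
by have [Pi [hS _]] := (P1 Q g qQ gQ).1 iso; exists Pi.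
Qed.
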